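(* Let $f:(0,1]\to(0,\infty)$ be the compliance--volume fraction Pareto front (as described in the context) and let $f^{-1}:[f(1),+\infty[\,\to(0,1]$ be its reciprocal (inverse) function, so that $f^{-1}(f(1))=1$. Then for every real $a>1$ and every $x\in[f(1),+\infty[$, $$a\,f^{-1}(a x)\le f^{-1}(x).$$
   Context: Setting: a 2D structural topology optimization problem (compliance minimization under a volume fraction constraint) on a fixed design domain. For a volume fraction $V_f\in(0,1]$ (the ratio of the volume of the design to the volume of the design domain), $f(V_f)$ denotes the globally optimal compliance attainable by a design of volume fraction $V_f$, computed for a unit load, unit out-of-plane thickness and unit Young's modulus; the graph of $f$ is the compliance--volume fraction Pareto front. Standing assumptions used for $f$: $f$ is differentiable on $(0,1]$ with $f'(V_f)<0$ (so $f$ is strictly decreasing), and $f(V_f)\to+\infty$ as $V_f\searrow 0$, so that $f$ is a bijection from $(0,1]$ onto $[f(1),+\infty[$ with inverse $f^{-1}$. The efficiency ratio (ER) is $n(V_f)=-V_f\,f'(V_f)/f(V_f)$, and it is assumed that $n(V_f)\le 1$ for all $V_f\in(0,1]$. *)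

(* Defs.v *)
From Stdlib Require Import Reals.
From Coquelicot Require Import Coquelicot.
Open Scope R_scope.

Definition in_dom (V : R) : Prop := 0 < V <= 1.

(* [f] has derivative [l] at [V] relative to the domain (0,1]:
   (f W - f V)/(W - V) -> l as W -> V with W in (0,1], W <> V.
   At interior points this is the usual derivative; at V = 1 it is the
   left derivative. *)
Definition has_derive_dom (f : R -> R) (V l : R) : Prop :=
  filterlim (fun W => (f W - f V) / (W - V))
    (within (fun W => in_dom W /\ W <> V) (locally V)) (locally l).

Definition ER (f df : R -> R) (V : R) : R := - V * df V / f V.

(* Main.v *)
Require Import Defs.
From Stdlib Require Import Reals Lra.
From Coquelicot Require Import Coquelicot.
Open Scope R_scope.

Lemma dom_to_lim f V l : 0 < V < 1 -> has_derive_dom f V l -> derivable_pt_lim f V l.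
Proof.
  intros HV H eps Heps.
  specialize (H (ball l eps) (locally_ball l (mkposreal eps Heps))).
  destruct H as [d Hd].
  assert (Hp : 0 < Rmin d (Rmin V (1 - V))).
  { destruct d as [d dp]; simpl. repeat apply Rmin_pos; lra. }
  exists (mkposreal _ Hp). intros h hne hlt. simpl in hlt.
  assert (H1 := Rmin_l d (Rmin V (1-V))).
  assert (H2 := Rmin_r d (Rmin V (1-V))).
  assert (H3 := Rmin_l V (1-V)). assert (H4 := Rmin_r V (1-V)).
  assert (Hh := Rabs_def2 _ _ (Rlt_le_trans _ _ _ hlt (Rle_refl _))).
  specialize (Hd (V + h)).
  assert (Hb : ball V d (V + h)).
  { unfold ball; simpl; unfold AbsRing_ball, abs, minus, plus, opp; simpl.
    replace (V + h + - V) with h by ring. lra. }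
  specialize (Hd Hb).
  assert (Hdom : in_dom (V + h) /\ V + h <> V).
  { unfold in_dom. destruct Hh. split; [split|]; lra. }
  specialize (Hd Hdom).
  unfold ball in Hd; simpl in Hd; unfold AbsRing_ball, abs, minus, plus, opp in Hd; simpl in Hd.
  replace (V + h - V) with h in Hd by ring. exact Hd.
Qed.

Lemma mono (g g' : R -> R) :
  (forall c, 0 < c < 1 -> derivable_pt_lim g c (g' c)) ->
  (forall c, 0 < c < 1 -> 0 <= g' c) ->
  forall x y, 0 < x -> x <= y -> y < 1 -> g x <= g y.
Proof.
  intros Hd Hp x y Hx Hxy Hy.
  destruct (Req_dec x y) as [->|Hne]; [lra|].
  destruct (MVT_cor2 g g' x y) as [c [Hc1 Hc2]]; [lra| |].
  { intros c Hc. apply Hd. lra. }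
  assert (0 <= g' c) by (apply Hp; lra).
  assert (0 <= g' c * (y - x)) by (apply Rmult_le_pos; lra). lra.
Qed.

Theorem lemma2 (f df finv : R -> R)
  (Hpos : forall V, in_dom V -> 0 < f V)
  (Hder : forall V, in_dom V -> has_derive_dom f V (df V))
  (Hneg : forall V, in_dom V -> df V < 0)
  (Hlim : filterlim f (at_right 0) (Rbar_locally p_infty))
  (Hinv1 : forall x, f 1 <= x -> in_dom (finv x) /\ f (finv x) = x)
  (Hinv2 : forall V, in_dom V -> finv (f V) = V)
  (HER : forall V, in_dom V -> ER f df V <= 1) :
  forall a x, 1 < a -> f 1 <= x -> a * finv (a * x) <= finv x.
Proof.
  assert (Hd : forall c, 0 < c < 1 -> derivable_pt_lim f c (df c)).
  { intros c Hc. apply dom_to_lim; [lra|]. apply Hder. unfold in_dom; lra. }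
  assert (Hmf : forall x y, 0 < x -> x <= y -> y < 1 -> f y <= f x).
  { intros x y Hx Hxy Hy.
    assert (H := mono (fun V => - f V) (fun V => - df V)).
    simpl in H. enough (- f x <= - f y) by lra. apply H; auto.
    - intros c Hc. apply derivable_pt_lim_opp. auto.
    - intros c Hc. assert (df c < 0) by (apply Hneg; unfold in_dom; lra). lra. }
  assert (Hg : forall x y, 0 < x -> x <= y -> y < 1 -> x * f x <= y * f y).
  { intros x y Hx Hxy Hy.
    apply (mono (fun V => V * f V) (fun V => 1 * f V + V * df V)); auto.
    - intros c Hc. apply (derivable_pt_lim_mult id f). apply derivable_pt_lim_id. auto.
    - intros c Hc. assert (Hc' : in_dom c) by (unfold in_dom; lra).
      assert (H1 := HER c Hc'). assert (H2 := Hpos c Hc'). unfold ER in H1.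
      apply Rmult_le_compat_r with (r := f c) in H1; [|lra].
      unfold Rdiv in H1. rewrite Rmult_assoc, Rinv_l in H1 by lra. lra. }
  assert (H1 : in_dom 1) by (unfold in_dom; lra).
  assert (Hend : forall W, 0 < W < 1 -> W * f W <= f 1).
  { intros W HW. destruct (Rle_or_lt (W * f W) (f 1)) as [|Hc]; [assumption|exfalso].
    set (c := W * f W - f 1).
    assert (Hcp : 0 < c) by (unfold c; lra).
    assert (Hf1 := Hpos 1 H1).
    specialize (Hder 1 H1 (ball (df 1) 1) (locally_ball (df 1) (mkposreal 1 Rlt_0_1))).
    destruct Hder as [d Hdd].
    set (K := Rabs (df 1) + 2).
    assert (HK : 2 <= K) by (unfold K; assert (0 <= Rabs (df 1)) by apply Rabs_pos; lra).
    set (m := Rmin d (Rmin (1 - W) (c / K))).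
    assert (Hm1 := Rmin_l d (Rmin (1 - W) (c / K))).
    assert (Hm2 := Rmin_r d (Rmin (1 - W) (c / K))).
    assert (Hm3 := Rmin_l (1 - W) (c / K)). assert (Hm4 := Rmin_r (1 - W) (c / K)).
    fold m in Hm1, Hm2.
    assert (HcK : 0 < c / K) by (apply Rdiv_lt_0_compat; lra).
    assert (Hmp : 0 < m).
    { unfold m. destruct d as [d dp]; simpl. repeat apply Rmin_pos; lra. }
    set (U := 1 - m / 2).
    assert (HUb : ball 1 d U).
    { unfold ball; simpl; unfold AbsRing_ball, abs, minus, plus, opp; simpl.
      unfold U. rewrite Rabs_left by lra. lra. }
    assert (HUd : in_dom U /\ U <> 1) by (unfold in_dom, U; split; [split|]; lra).
    specialize (Hdd U HUb HUd).
    unfold ball in Hdd; simpl in Hdd; unfold AbsRing_ball, abs, minus, plus, opp in Hdd; simpl in Hdd.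
    set (q := (f U - f 1) / (U - 1)) in Hdd.
    assert (Hq : f U - f 1 = q * (U - 1)) by (unfold q; field; unfold U; lra).
    assert (Hqa : Rabs q < K).
    { unfold K. assert (H := Rabs_triang_inv q (df 1)). unfold Rminus in H. lra. }
    assert (HgU : W * f W <= U * f U) by (apply Hg; unfold U; lra).
    assert (Hm5 : m * K <= c).
    { assert (Hm6 : m <= c / K) by lra.
      apply Rmult_le_compat_r with (r := K) in Hm6; [|lra].
      unfold Rdiv in Hm6. rewrite Rmult_assoc, Rinv_l, Rmult_1_r in Hm6 by lra. lra. }
    assert (Hqle : q * (U - 1) <= Rabs q * (1 - U)).
    { replace (q * (U - 1)) with ((- q) * (1 - U)) by ring.
      apply Rmult_le_compat_r; [unfold U; lra|]. rewrite <- Rabs_Ropp. apply Rle_abs. }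
    assert (Hq2 : Rabs q * (1 - U) <= K * (m / 2)).
    { replace (1 - U) with (m / 2) by (unfold U; ring).
      apply Rmult_le_compat_r; lra. }
    assert (HUU : U * f U - f 1 = U * (q * (U - 1)) + (U - 1) * f 1) by (rewrite <- Hq; ring).
    assert (0 <= U * (Rabs q * (1 - U))).
    { apply Rmult_le_pos; [unfold U; lra|]. apply Rmult_le_pos; [apply Rabs_pos|unfold U; lra]. }
    assert (U * (q * (U - 1)) <= U * (Rabs q * (1 - U))) by (apply Rmult_le_compat_l; [unfold U|]; lra).
    assert (U * (Rabs q * (1 - U)) <= Rabs q * (1 - U)).
    { assert (0 <= Rabs q * (1 - U)) by (apply Rmult_le_pos; [apply Rabs_pos|unfold U; lra]).
      assert (U <= 1) by (unfold U; lra). nra. }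
    assert ((U - 1) * f 1 <= 0) by (assert (U - 1 <= 0) by (unfold U; lra); nra).
    unfold c in Hm5. nra. }
  intros a x Ha Hx.
  assert (Hf1 := Hpos 1 H1).
  destruct (Hinv1 x Hx) as [HV HfV].
  assert (Hax : f 1 <= a * x) by nra.
  destruct (Hinv1 (a * x) Hax) as [HW HfW].
  set (V := finv x) in *. set (W := finv (a * x)) in *.
  unfold in_dom in HV, HW.
  assert (HW1 : W < 1).
  { destruct (Req_dec W 1) as [E|]; [|lra]. rewrite E in HfW. nra. }
  assert (HWV : W < V).
  { destruct (Rlt_or_le W V) as [|HVW]; [assumption|exfalso].
    assert (f W <= f V) by (apply Hmf; lra). nra. }
  assert (HgWV : W * f W <= V * f V).
  { destruct (Req_dec V 1) as [E|].
    - rewrite E, Rmult_1_l. apply Hend. lra.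
    - apply Hg; lra. }
  rewrite HfW, HfV in HgWV. nra.
Qed.
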